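(* (1) If $\mathbb{E}\min(Z,W)<\infty$, then $\sup_{n\in\mathbb{N}}|R_n|<\infty$ almost surely. (2) If $\mathbb{E}\min(Z,W)=\infty$, then $\sup_{n\in\mathbb{N}}|R_n|=\infty$ almost surely.
   Context: Let $Z,W,(Z_n)_{n\ge1},(W_n)_{n\ge1}$ be independent, identically distributed random variables taking values in $\mathbb{N}=\{1,2,3,\dots\}$. Define sets $T_n\subset\mathbb{Z}$ recursively by $T_n=\{n\}$ for $n\le 0$ and $T_n=\{n\}\cup T_{n-Z_n}\cup T_{n-W_n}$ for $n\ge1$. Let $\mathcal{L}_n=T_n\cap\{0,-1,-2,\dots\}$ and $R_n=\max\mathcal{L}_n$. *)

(* Defs.v *)
From HB Require Import structures.
From mathcomp Require Import all_boot all_order all_algebra.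
From mathcomp Require Import all_classical all_reals all_analysis.
Set Implicit Arguments. Unset Strict Implicit. Unset Printing Implicit Defensive.
Import Order.TTheory GRing.Theory Num.Theory.
Local Open Scope classical_set_scope.
Local Open Scope ring_scope.

(* Membership in T_n for a fixed outcome, given the sequences z n = Z_n(w),
   w n = W_n(w) (index n >= 1).  [inT z w n m] means m \in T_n.
   T_n = {n} for n <= 0, T_n = {n} \cup T_{n-Z_n} \cup T_{n-W_n} for n >= 1;
   the inductive predicate is the (unique, since Z_n,W_n >= 1) solution of
   this recursion. *)
Inductive inT (z w : nat -> nat) : int -> int -> Prop :=
| inT_self (n : int) : inT z w n n
| inT_Z (k : nat) (m : int) :
    inT z w ((k.+1)%:Z - (z k.+1)%:Z) m -> inT z w ((k.+1)%:Z) m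
| inT_W (k : nat) (m : int) :
    inT z w ((k.+1)%:Z - (w k.+1)%:Z) m -> inT z w ((k.+1)%:Z) m.

Definition Lset (z w : nat -> nat) (n : int) : set int :=
  [set m | inT z w n m /\ m <= 0].

Definition is_max_L (z w : nat -> nat) (n : int) (r : int) : Prop :=
  Lset z w n r /\ (forall m, Lset z w n m -> m <= r).

(* R_n = max L_n (chosen by xget; L_n is nonempty and finite, so the max exists). *)
Definition Rn (z w : nat -> nat) (n : int) : int :=
  xget 0 (is_max_L z w n).

(* The rvfam (Z, W, Z_1, W_1, Z_2, W_2, ...) indexed by nat * bool:
   (0,false) |-> Z, (0,true) |-> W, (n,false) |-> Z_n, (n,true) |-> W_n for n >= 1. *)
Definition rvfam {T : Type} (Z W : T -> nat) (Zs Ws : nat -> T -> nat)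
  (i : nat * bool) : T -> nat :=
  match i with
  | (0, false) => Z
  | (0, true) => W
  | (n.+1, false) => Zs n.+1
  | (n.+1, true) => Ws n.+1
  end.

Definition mutually_independent {d} {T : measurableType d} {R : realType}
  (P : probability T R) {I : eqType} (X : I -> T -> nat) : Prop :=
  forall (J : seq I) (A : I -> set nat), uniq J ->
    P (\bigcap_(i in [set` J]) (X i @^-1` A i)) =
    (\prod_(i <- J) P (X i @^-1` A i))%E.

(* Main.v *)
Require Import Defs.
From HB Require Import structures.
From mathcomp Require Import all_boot all_order all_algebra.
From mathcomp Require Import all_classical all_reals all_analysis.
From mathcomp Require Import zify ring lra.
Import Order.TTheory GRing.Theory Num.Theory.
Local Open Scope classical_set_scope.
Local Open Scope ring_scope.

Section Det.
Variables (z w : nat -> nat).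
Hypothesis zpos : forall k, (0 < z k.+1)%N.
Hypothesis wpos : forall k, (0 < w k.+1)%N.

Lemma inT_nonpos j m : inT z w j m -> j <= 0 -> m = j.
Proof. by case => // k m' _; rewrite lez_nat. Qed.

Lemma leaf_bound (B : nat) (n : nat) :
  (forall k, (k < n)%N -> (minn (z k.+1) (w k.+1) <= k.+1 + B)%N) ->
  exists m, inT z w n%:Z m /\ m <= 0 /\ - B%:Z <= m.
Proof.
elim/ltn_ind: n => -[|k] IH H.
  by exists 0; split; [exact: inT_self|lia].
have Hk := H k (ltnSn k).
have gen : forall s, (0 < s)%N -> (s <= k.+1 + B)%N ->
   (forall m, inT z w (k.+1%:Z - s%:Z) m -> inT z w k.+1%:Z m) ->
   exists m, inT z w k.+1%:Z m /\ m <= 0 /\ - B%:Z <= m.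
  move=> s s0 sB Hc.
  case: (leqP s k.+1) => sk.
    have [m [Hm [m0 mB]]] : exists m, inT z w (k.+1 - s)%N%:Z m /\ m <= 0 /\ - B%:Z <= m.
      apply: IH; first lia.
      move=> j jlt; apply: H; lia.
    by exists m; split => //; apply: Hc; rewrite subzn.
  exists (k.+1%:Z - s%:Z); split; first by apply: Hc; exact: inT_self.
  split; lia.
case: (leqP (z k.+1) (w k.+1)) => zw.
  apply: (gen (z k.+1)) => //; first lia.
  by move=> m Hm; apply: inT_Z.
apply: (gen (w k.+1)) => //; first lia.
by move=> m Hm; apply: inT_W.
Qed.

Lemma int_max (S : set int) : (exists m, S m) -> (forall m, S m -> m <= 0) ->
  exists r, S r /\ forall m, S m -> m <= r.
Proof.
move=> [m0 Sm0] Hle.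
have ex : exists k, `[< S (- (k%:Z)) >].
  exists `|m0|%N; apply/asboolP.
  have := Hle _ Sm0 => h0.
  by have -> : - (`|m0|%N%:Z) = m0 by lia.
have [k /asboolP Sk Hmin] := ex_minnP ex.
exists (- k%:Z); split => // m Sm.
have := Hle _ Sm => h0.
have : (k <= `|m|%N)%N.
  apply: Hmin; apply/asboolP.
  by have -> : - (`|m|%N%:Z) = m by lia.
lia.
Qed.

Lemma Rn_max (n : nat) : is_max_L z w n%:Z (Rn z w n%:Z).
Proof.
apply: xgetPex; apply: int_max.
  have H : forall k, (k < n)%N -> (minn (z k.+1) (w k.+1) <= k.+1 + \sum_(k < n) minn (z k.+1) (w k.+1))%N.
    move=> k kn; rewrite (bigD1 (Ordinal kn)) //=; lia.
  have [m [Hm [m0 _]]] := @leaf_bound _ n H.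
  by exists m.
by move=> m [].
Qed.

Lemma Rn_bound (B : nat) (n : nat) :
  (forall k, (minn (z k.+1) (w k.+1) <= k.+1 + B)%N) ->
  `|Rn z w n%:Z| <= B%:Z.
Proof.
move=> H; have [[_ r0] rmax] := Rn_max n.
have [m [Hm [m0 mB]]] := @leaf_bound B n (fun k _ => H k).
have := rmax m (conj Hm m0); lia.
Qed.

Lemma Rn_large (B : nat) (k : nat) :
  (k.+1 + B < minn (z k.+1) (w k.+1))%N ->
  B%:Z < `|Rn z w k.+1%:Z|.
Proof.
move=> H; have [[Hr r0] _] := Rn_max k.+1.
have gen : forall j m, inT z w j m -> j = k.+1%:Z -> m <= 0 -> B%:Z < `|m|.
  move=> j m; case.
  - by move=> n1 -> m0; lia.
  - move=> k1 m1 Hm e m0; have ek : k1 = k by lia.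
    subst k1; have := @inT_nonpos _ _ Hm; lia.
  - move=> k1 m1 Hm e m0; have ek : k1 = k by lia.
    subst k1; have := @inT_nonpos _ _ Hm; lia.
exact: gen Hr erefl r0.
Qed.
End Det.

Section Prob.
Context d (T : measurableType d) (R : realType) (P : probability T R)
  (Z W : T -> nat) (Zs Ws : nat -> T -> nat).
Hypothesis mX : forall i, measurable_fun setT (rvfam Z W Zs Ws i).
Hypothesis indep : mutually_independent P (rvfam Z W Zs Ws).
Hypothesis ident : forall i (A : set nat),
     P (rvfam Z W Zs Ws i @^-1` A) = P (Z @^-1` A).
Local Notation X := (rvfam Z W Zs Ws).

Lemma mpre i (A : set nat) : measurable (X i @^-1` A).
Proof. by rewrite -[X i @^-1` A]setTI; apply: mX. Qed.

Definition pr (A : set T) : R := fine (P A).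

Lemma prE A : measurable A -> P A = (pr A)%:E.
Proof. by move=> mA; rewrite /pr fineK // fin_num_measure. Qed.

Lemma pr_ge0 A : 0 <= pr A.
Proof. by rewrite /pr fine_ge0 // measure_ge0. Qed.

Lemma pr_le1 A : measurable A -> pr A <= 1.
Proof. by move=> mA; rewrite -lee_fin -prE // probability_le1. Qed.

Lemma bigcap_cons {I : eqType} (F : I -> set T) a J :
  \bigcap_(i in [set` a :: J]) F i = F a `&` \bigcap_(i in [set` J]) F i.
Proof.
apply/seteqP; split => x.
  move=> H; split; first by apply: H => /=; rewrite inE eqxx.
  by move=> i /= iJ; apply: H => /=; rewrite inE iJ orbT.
move=> [Fa H] i /=; rewrite inE => /orP [/eqP -> //|iJ]; exact: H.
Qed.

Lemma cyl J (A : nat * bool -> set nat) : uniq J ->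
  pr (\bigcap_(i in [set` J]) X i @^-1` A i) = \prod_(i <- J) pr (X i @^-1` A i).
Proof.
move=> uJ; rewrite {1}/pr indep //.
rewrite (eq_bigr (fun i => (pr (X i @^-1` A i))%:E)); last by move=> i _; rewrite prE //; exact: mpre.
by rewrite prodEFin.
Qed.

Lemma prX i A : pr (X i @^-1` A) = pr (Z @^-1` A).
Proof. by rewrite /pr ident. Qed.

Lemma pair_pr a b (A B : set nat) : a != b ->
  pr (X a @^-1` A `&` X b @^-1` B) = pr (Z @^-1` A) * pr (Z @^-1` B).
Proof.
move=> ab.
have := @cyl [:: a; b] (fun i => if i == a then A else B).
have ba : (b == a) = false by apply/negbTE; rewrite eq_sym.
rewrite /= inE ab andbT big_cons big_cons big_nil mulr1 eqxx ba => /(_ isT) H.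
rewrite -(prX a) -(prX b) -H; congr pr.
by rewrite bigcap_cons bigcap_cons set_nil bigcap_set0 setIT eqxx ba.
Qed.

Lemma setmin (U V : T -> nat) k :
  [set x | (k < minn (U x) (V x))%N] = U @^-1` [set n | (k < n)%N] `&` V @^-1` [set n | (k < n)%N].
Proof. by apply/seteqP; split => x /=; rewrite leq_min => /andP. Qed.

Lemma mT k : measurable [set x | (k < minn (Z x) (W x))%N].
Proof.
rewrite setmin; apply: measurableI.
  exact: (mpre (0, false)).
exact: (mpre (0, true)).
Qed.

Lemma tail : (\int[P]_x ((minn (Z x) (W x))%:R : R)%:E =
   \sum_(k <oo) P [set x | (k < minn (Z x) (W x))%N])%E.
Proof.
have pt : forall x, (((minn (Z x) (W x))%:R : R)%:E =
   \sum_(k <oo) (\1_[set x | (k < minn (Z x) (W x))%N] x)%:E)%E.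
  move=> x; rewrite (@nneseries_split _ _ 0 (minn (Z x) (W x))); last first.
    by move=> k _; rewrite lee_fin indicE.
  rewrite eseries0; last first.
    by move=> i; rewrite add0n /= indicE => Hi _; rewrite memNset //= ltnNge Hi.
  rewrite adde0 add0n sumEFin; congr EFin.
  rewrite (eq_big_nat _ _ (F2 := fun _ => 1)); last first.
    by move=> i /andP [_ Hi]; rewrite indicE mem_set.
  by rewrite big_const_nat subn0; elim: (minn _ _) => //= n <-; rewrite -add1n natrD.
rewrite (eq_integral (fun x => \sum_(k <oo) (\1_[set x | (k < minn (Z x) (W x))%N] x)%:E)%E); last by move=> x _; rewrite pt.
rewrite (@integral_nneseries _ _ _ P setT measurableT
   (fun k x => (\1_[set x | (k < minn (Z x) (W x))%N] x)%:E)); last 2 first.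
  - by move=> n; apply/measurable_realfun.measurable_EFinP; apply: measurable_realfun.measurable_indic; exact: mT.
  - by move=> n x _; rewrite lee_fin indicE.
apply: eq_eseriesr => k _.
by rewrite integral_indic // ?setIT //; exact: mT.
Qed.

Hypothesis pos : forall i x, (0 < rvfam Z W Zs Ws i x)%N.

Lemma zpos x k : (0 < Zs k.+1 x)%N. Proof. exact: (pos (k.+1, false)). Qed.
Lemma wpos x k : (0 < Ws k.+1 x)%N. Proof. exact: (pos (k.+1, true)). Qed.

Definition F (B : nat) k := [set x | (k.+1 + B < minn (Zs k.+1 x) (Ws k.+1 x))%N].

Lemma mF B k : measurable (F B k).
Proof.
rewrite /F setmin; apply: measurableI.
  exact: (mpre (k.+1, false)).
exact: (mpre (k.+1, true)).
Qed.

Lemma PF B k : P (F B k) = P [set x | (k.+1 + B < minn (Z x) (W x))%N].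
Proof.
rewrite !prE; [congr EFin| exact: mT | exact: mF].
rewrite /F !setmin.
rewrite (@pair_pr (k.+1, false) (k.+1, true)); last by apply/negP => /eqP [].
rewrite -(@pair_pr (0, false) (0, true)) //.
Qed.

Lemma part1 : ((\int[P]_x ((minn (Z x) (W x))%:R : R)%:E < +oo)%E ->
    {ae P, forall x, exists B : nat, forall n : nat, (0 < n)%N ->
        `|Rn (fun k => Zs k x) (fun k => Ws k x) n%:Z| <= B%:Z}).
Proof.
rewrite tail => Hfin.
have H0 : P (lim_sup_set (F 0)) = 0.
  apply: lim_sup_set_cvg0; first exact: mF.
  apply: le_lt_trans Hfin; apply: lee_nneseries => // k _.
  apply: (@le_trans _ _ (P [set x | (k.+1 + 0 < minn (Z x) (W x))%N])); first by rewrite le_eqVlt; apply/orP; left; apply/eqP; exact: (PF 0 k).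
  apply: le_measure; rewrite ?inE; try exact: mT.
  by move=> x /=; rewrite addn0; apply: ltnW.
exists (lim_sup_set (F 0)); split => //.
  apply: bigcap_measurable => // k _; apply: bigcup_measurable => j _; exact: mF.
move=> x /= nQ n _; apply: contrapT => H; apply: nQ.
exists (\sum_(j < n) minn (Zs j.+1 x) (Ws j.+1 x))%N => m m0.
case: m m0 => // m _.
apply: Rn_bound; [exact: zpos|exact: wpos|] => k.
case: (ltnP k n) => kn.
  rewrite (bigD1 (Ordinal kn)) //=; lia.
have : ~ F 0 k x by move=> Fk; apply: H; exists k.
by rewrite /F /= addn0 => /negP; rewrite -leqNgt => h; lia.
Qed.

Definition cylS (J : seq (nat * bool)) (A : nat * bool -> set nat) :=
  \bigcap_(i in [set` J]) X i @^-1` A i.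

Lemma cylS_nil A : cylS [::] A = setT.
Proof. by rewrite /cylS set_nil bigcap_set0. Qed.

Lemma cylS_cons a J A : cylS (a :: J) A = X a @^-1` A a `&` cylS J A.
Proof. exact: bigcap_cons. Qed.

Lemma mcylS J A : measurable (cylS J A).
Proof.
elim: J => [|a J IH]; first by rewrite cylS_nil.
by rewrite cylS_cons; apply: measurableI => //; exact: mpre.
Qed.

Lemma cylS_eq J A A' : {in J, A =1 A'} -> cylS J A = cylS J A'.
Proof.
move=> H; apply/seteqP; split => x Hx i /= iJ.
  by rewrite -H //; exact: Hx.
by rewrite H //; exact: Hx.
Qed.

Lemma prU (U V : set T) : measurable U -> measurable V -> U `&` V = set0 ->
  pr (U `|` V) = pr U + pr V.
Proof.
move=> mU mV UV; rewrite /pr measureU // fineD //; exact: fin_num_measure.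
Qed.

Lemma prC (U : set T) : measurable U -> pr (~` U) = 1 - pr U.
Proof.
by move=> mU; rewrite /pr probability_setC // fineB // fin_num_measure.
Qed.

Lemma pr_le (U V : set T) : measurable U -> measurable V -> U `<=` V -> pr U <= pr V.
Proof.
move=> mU mV UV; rewrite -lee_fin -!prE //; apply: le_measure => //; by rewrite inE.
Qed.

Fixpoint Qs (B : nat) (N : nat) : set T :=
  if N is N'.+1 then Qs B N' `&` ~` F B N' else setT.

Lemma mQs B N : measurable (Qs B N).
Proof.
elim: N => [|N IH] //=; apply: measurableI => //; apply: measurableC; exact: mF.
Qed.

Definition aa B k := pr (Z @^-1` [set n | (k.+1 + B < n)%N]).

Lemma claim B N : forall J A, uniq J -> (forall i, i \in J -> (N < i.1)%N) ->
  pr (Qs B N `&` cylS J A) =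
  (\prod_(k < N) (1 - aa B k * aa B k)) * \prod_(i <- J) pr (X i @^-1` A i).
Proof.
elim: N => [|N IH] J A uJ HJ.
  by rewrite /= setTI big_ord0 mul1r /cylS cyl.
set a0 := (N.+1, false); set a1 := (N.+1, true).
set Lc := [set n | (n <= N.+1 + B)%N]; set Gc := [set n | (N.+1 + B < n)%N].
have a0J : a0 \notin J by apply/negP => /HJ /=; rewrite ltnn.
have a1J : a1 \notin J by apply/negP => /HJ /=; rewrite ltnn.
have a01 : a0 != a1 by apply/negP => /eqP [].
pose A1 := fun i => if i == a0 then Lc else A i.
pose A2 := fun i => if i == a0 then Gc else if i == a1 then Lc else A i.
have eA1 : {in J, A1 =1 A}.
  by move=> i iJ; rewrite /A1; case: eqP => // e; move: a0J; rewrite -e iJ.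
have eA2 : {in J, A2 =1 A}.
  move=> i iJ; rewrite /A2; case: eqP => [e|_]; first by move: a0J; rewrite -e iJ.
  by case: eqP => // e; move: a1J; rewrite -e iJ.
have HJ' : forall i, i \in J -> (N < i.1)%N by move=> i /HJ; apply: ltnW.
have e1 := IH (a0 :: J) A1.
have e2 := IH (a0 :: a1 :: J) A2.
rewrite /= a0J uJ in e1; rewrite /= inE negb_or a01 a0J a1J uJ in e2.
have {e1}e1 := e1 isT; have {e2}e2 := e2 isT.
have h1 : forall i, i \in a0 :: J -> (N < i.1)%N.
  by move=> i; rewrite inE => /orP [/eqP -> //|/HJ'].
have h2 : forall i, i \in a0 :: a1 :: J -> (N < i.1)%N.
  by move=> i; rewrite !inE => /orP [/eqP -> //|/orP [/eqP -> //|/HJ']].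
move: {e1 h1}(e1 h1) {e2 h2}(e2 h2).
rewrite !cylS_cons (@cylS_eq J _ _ eA1) (@cylS_eq J _ _ eA2) !big_cons.
rewrite (eq_big_seq _ (fun i iJ => congr1 (fun S => pr (X i @^-1` S)) (eA1 i iJ))).
rewrite (eq_big_seq _ (fun i iJ => congr1 (fun S => pr (X i @^-1` S)) (eA2 i iJ))).
rewrite /A1 /A2 eqxx (negbTE (_ : a1 != a0)) ?eqxx; last by rewrite eq_sym.
move=> e1 e2.
have eS : Qs B N.+1 `&` cylS J A = (Qs B N `&` (X a0 @^-1` Lc `&` cylS J A)) `|`
   (Qs B N `&` (X a0 @^-1` Gc `&` (X a1 @^-1` Lc `&` cylS J A))).
  rewrite /Lc /Gc /a0 /a1 /=; apply/seteqP; split => x /=.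
  - move=> [[Qx nF] Cx]; rewrite /F /= in nF.
    case: (leqP (Zs N.+1 x) (N.+1 + B)) => h; first by left.
    right; split => //; split => //; split => //.
    rewrite leqNgt; apply/negP => h2; apply: nF; rewrite leq_min h h2.
    done.
  - case => [[Qx [Lx Cx]] | [Qx [Gx [Lx Cx]]]]; (split => //; split => //);
      rewrite /F /= leq_min => /andP [u v]; lia.
have mQ := mQs B N.
have mC := mcylS J A.
rewrite eS prU; first last.
- apply/seteqP; split => x // [[_ [Lx _]] [_ [Gx _]]].
  by move: Lx Gx; rewrite /Lc /Gc /=; lia.
- apply: measurableI => //; apply: measurableI; first exact: mpre.
  apply: measurableI => //; exact: mpre.
- apply: measurableI => //; apply: measurableI => //; exact: mpre.
rewrite e1 e2 !prX.
have -> : pr (Z @^-1` Lc) = 1 - aa B N.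
  rewrite /aa -prC; last by exact: (mpre (0, false)).
  congr pr; apply/seteqP; split => x /=; rewrite /Lc /=; lia.
rewrite -/(aa B N) big_ord_recr /=.
ring.
Qed.

Lemma prQ B N : pr (Qs B N) = \prod_(k < N) (1 - aa B k * aa B k).
Proof.
have := @claim B N [::] (fun _ => setT) isT (fun i (h : i \in [::]) => ltac:(by [])).
by rewrite cylS_nil setIT big_nil mulr1.
Qed.

Lemma aa_ge0 B k : 0 <= aa B k. Proof. exact: pr_ge0. Qed.
Lemma aa_le1 B k : aa B k <= 1. Proof. by apply: pr_le1; exact: (mpre (0, false)). Qed.

Lemma prod_bound B N :
  \prod_(k < N) (1 - aa B k * aa B k) * (1 + \sum_(k < N) aa B k * aa B k) <= 1.
Proof.
elim: N => [|N IH]; first by rewrite big_ord0 big_ord0 addr0 mulr1.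
rewrite big_ord_recr big_ord_recr /=.
have c0 : 0 <= \prod_(k < N) (1 - aa B k * aa B k).
  apply: prodr_ge0 => k _; have := aa_ge0 B k; have := aa_le1 B k; nra.
have s0 : 0 <= \sum_(k < N) aa B k * aa B k.
  apply: sumr_ge0 => k _; have := aa_ge0 B k; nra.
have := aa_ge0 B N; have := aa_le1 B N.
set c := \prod_(k < N) _ in c0 IH *; set S := \sum_(k < N) _ in s0 IH *.
set a := aa B N => a1 a0.
have p0 : 0 <= a * a by nra.
have p1 : a * a <= 1 by nra.
set p := a * a in p0 p1 *.
have : 0 <= c * (p * S + p * p) by apply: mulr_ge0 => //; nra.
nra.
Qed.

Lemma pmin B k : P [set x | (k.+1 + B < minn (Z x) (W x))%N] = (aa B k * aa B k)%:E.
Proof.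
rewrite prE; last exact: mT.
congr EFin; rewrite setmin.
by rewrite (@pair_pr (0, false) (0, true)) //; apply/negP => /eqP [].
Qed.

Lemma unbounded B :
  (\sum_(k <oo) P [set x | (k < minn (Z x) (W x))%N])%E = +oo%E ->
  forall n : nat, exists N, n%:R <= \sum_(k < N) aa B k * aa B k.
Proof.
move=> Hinf n; apply: contrapT => H.
have HS : forall N, \sum_(k < N) aa B k * aa B k < n%:R.
  move=> N; rewrite ltNge; apply/negP => h; apply: H; by exists N.
move: Hinf; rewrite (@nneseries_split _ _ 0 B.+1) //.
rewrite add0n -nneseries_addn //.
rewrite (eq_eseriesr (g := fun i => (aa B i * aa B i)%:E)); last first.
  move=> i _; rewrite -pmin; congr (P _); apply/seteqP; split => x /=;
  by rewrite addnS addSn.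
rewrite (eq_bigr (fun j => (pr [set x | (j < minn (Z x) (W x))%N])%:E)); last first.
  by move=> j _; rewrite prE //; exact: mT.
rewrite sumEFin.
have : (\sum_(0 <= i <oo) (aa B i * aa B i)%:E <= n%:R%:E)%E.
  apply: lime_le; first by apply: is_cvg_nneseries => k _ _; rewrite lee_fin; 
    apply: mulr_ge0; exact: aa_ge0.
  apply: nearW => N; rewrite sumEFin lee_fin big_mkord; exact: ltW.
case: (\sum_(0 <= i <oo) _)%E => // r.
Qed.

Lemma mbig B : measurable (\bigcap_N Qs B N).
Proof. by apply: bigcapT_measurable => k; exact: mQs. Qed.

Lemma Pbad B :
  (\sum_(k <oo) P [set x | (k < minn (Z x) (W x))%N])%E = +oo%E ->
  P (\bigcap_N Qs B N) = 0.
Proof.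
move=> Hinf; rewrite prE; last exact: mbig.
set x := pr _.
have x0 : 0 <= x by exact: pr_ge0.
have Hn : forall n : nat, x * (1 + n%:R) <= 1.
  move=> n; have [N HN] := unbounded B Hinf n.
  apply: le_trans (prod_bound B N); apply: ler_pM => //.
  - rewrite -prQ; apply: pr_le; [exact: mbig|exact: mQs|].
    by move=> y /(_ N I).
  - by rewrite lerD2l.
congr EFin; apply/eqP; rewrite eq_le x0 andbT; apply/negP => /negP.
rewrite -ltNge => xpos.
have := truncnS_gt (x^-1); set m := Num.Def.trunc _ => hm.
have := Hn m.
have : 1 < x * (1 + m%:R).
  have e : x * x^-1 = 1 := mulfV (lt0r_neq0 xpos).
  rewrite -natr1 addrC in hm.
  by rewrite -[X in X < _]e ltr_pM2l.
lra.
Qed.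

Lemma Qs_out B N x : ~ Qs B N x -> exists k, F B k x.
Proof.
elim: N => [|N IH] /= nQ; first by exfalso; apply: nQ.
case: (pselect (F B N x)) => [f|nf]; first by exists N.
by apply: IH => q; apply: nQ; split.
Qed.

Lemma part2 : ((\int[P]_x ((minn (Z x) (W x))%:R : R)%:E = +oo)%E ->
    {ae P, forall x, forall B : nat, exists n : nat, (0 < n)%N /\
        B%:Z < `|Rn (fun k => Zs k x) (fun k => Ws k x) n%:Z|}).
Proof.
rewrite tail => Hinf.
apply: (@negligibleS _ _ _ P (\bigcup_B \bigcap_N Qs B N)).
  move=> x /= nQ; apply: contrapT => H; apply: nQ => B.
  have [N nN] : exists N, ~ Qs B N x.
    apply: contrapT => h; apply: H; exists B => // N _; apply: contrapT => q.
    by apply: h; exists N.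
  have [k Fk] := @Qs_out B N x nN.
  exists k.+1; split => //; apply: Rn_large; [exact: zpos|exact: wpos|exact: Fk].
apply: negligible_bigcup => B; exists (\bigcap_N Qs B N); split => //.
- exact: mbig.
- exact: Pbad.
Qed.

End Prob.
Theorem theorem4 (d : measure_display) (T : measurableType d) (R : realType)
  (P : probability T R) (Z W : T -> nat) (Zs Ws : nat -> T -> nat) :
  (* measurability of all the random variables *)
  (forall i, measurable_fun setT (rvfam Z W Zs Ws i)) ->
  (* independence *)
  mutually_independent P (rvfam Z W Zs Ws) ->
  (* identically distributed *)
  (forall i (A : set nat),
     P (rvfam Z W Zs Ws i @^-1` A) = P (Z @^-1` A)) ->
  (* values in {1,2,3,...} *)
  (forall i x, (0 < rvfam Z W Zs Ws i x)%N) ->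
  ((* (1) *)
   ((\int[P]_x ((minn (Z x) (W x))%:R : R)%:E < +oo)%E ->
    {ae P, forall x, exists B : nat, forall n : nat, (0 < n)%N ->
        `|Rn (fun k => Zs k x) (fun k => Ws k x) n%:Z| <= B%:Z})
   /\
   (* (2) *)
   ((\int[P]_x ((minn (Z x) (W x))%:R : R)%:E = +oo)%E ->
    {ae P, forall x, forall B : nat, exists n : nat, (0 < n)%N /\
        B%:Z < `|Rn (fun k => Zs k x) (fun k => Ws k x) n%:Z|})).
Proof.
move=> mX indep ident pos; split.
  exact: (@part1 d T R P Z W Zs Ws mX indep ident pos).
exact: (@part2 d T R P Z W Zs Ws mX indep ident pos).
Qed.
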